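(* Define $V:\mathbb{R}\to\mathbb{R}$ by $V(x) = c_0$ for $x<1$ and $V(x) = c_0 - \frac{(x-1)^2}{2}$ for $x\ge 1$, where $c_0\in\mathbb{R}$ is the constant making $\int e^{-V}\,d\gamma = 1$. Then $x\mapsto V(x) + x^2/2$ is convex (i.e. $V''\ge -1$), $\sup V<\infty$, and there is no $L>0$ and no $L$-Lipschitz map $T:\mathbb{R}\to\mathbb{R}$ with $T_\#\gamma = e^{-V}\,d\gamma$.
   Context: $\gamma$ is the standard Gaussian measure on $\mathbb{R}$. The push-forward is $(T_\#\nu)(A)=\nu(T^{-1}(A))$ for Borel $A$. *)

(* Defs.v *)
From HB Require Import structures.
From mathcomp Require Import all_boot all_order all_algebra.
From mathcomp Require Import all_classical all_reals all_analysis.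
Set Implicit Arguments. Unset Strict Implicit. Unset Printing Implicit Defensive.
Import Order.TTheory GRing.Theory Num.Theory.
Local Open Scope ring_scope.

Definition Vpot {R : realType} (c0 : R) (x : R) : R :=
  if x < 1 then c0 else c0 - (x - 1) ^+ 2 / 2.

Definition gamma {R : realType} := @normal_prob R 0 1.

(* Main.v *)
Require Import Defs.
From HB Require Import structures.
From mathcomp Require Import all_boot all_order all_algebra.
From mathcomp Require Import all_classical all_reals all_analysis.
From mathcomp Require Import ring lra measurable_realfun.
Import Order.TTheory GRing.Theory Num.Theory numFieldNormedType.Exports.
Local Open Scope classical_set_scope.
Local Open Scope ring_scope.

Lemma tangent_le (R : realType) (c0 a x : R) : a <= 1 ->
  c0 + a * x - a ^+ 2 / 2 <= Vpot c0 x + x ^+ 2 / 2.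
Proof.
move=> a1; rewrite /Vpot; case: ifP => hx.
  have : 0 <= (x - a) ^+ 2 by rewrite sqr_ge0.
  nra.
have hx' : 1 <= x by rewrite leNgt hx.
nra.
Qed.

Lemma tangent_eq (R : realType) (c0 z : R) :
  Vpot c0 z + z ^+ 2 / 2 = c0 + Num.min z 1 * z - (Num.min z 1) ^+ 2 / 2.
Proof.
rewrite /Vpot /Num.min /Order.min; case: ifP => hz; first nra.
nra.
Qed.

Lemma convex_part (R : realType) (c0 x y t : R) : 0 <= t <= 1 ->
         Vpot c0 ((1 - t) * x + t * y) + ((1 - t) * x + t * y) ^+ 2 / 2
         <= (1 - t) * (Vpot c0 x + x ^+ 2 / 2) + t * (Vpot c0 y + y ^+ 2 / 2).
Proof.
move=> /andP[t0 t1].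
set z := (1 - t) * x + t * y.
rewrite (@tangent_eq R c0 z).
have ha : Num.min z 1 <= 1 by rewrite ge_min lexx orbT.
have h1 := @tangent_le R c0 _ x ha.
have h2 := @tangent_le R c0 _ y ha.
apply: (@le_trans _ _ ((1 - t) * (c0 + Num.min z 1 * x - Num.min z 1 ^+ 2 / 2) + t * (c0 + Num.min z 1 * y - Num.min z 1 ^+ 2 / 2))).
  by rewrite le_eqVlt; apply/orP; left; apply/eqP; rewrite /z; ring.
apply: lerD; apply: ler_wpM2l => //; lra.
Qed.

Lemma sup_part (R : realType) (c0 : R) : exists M : R, forall x : R, Vpot c0 x <= M.
Proof.
exists c0 => x; rewrite /Vpot; case: ifP => // _.
rewrite lerBlDr lerDl divr_ge0 // sqr_ge0 //.
Qed.

Lemma lip_cont (R : realType) (L : R) (T : R -> R) : 0 < L ->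
  (forall x y : R, `|T x - T y| <= L * `|x - y|) -> continuous T.
Proof.
move=> L0 HL x; apply/cvgrPdist_lt => e e0.
near=> y.
rewrite (le_lt_trans (HL x y)) // -ltr_pdivlMl //.
near: y; apply: cvgr_dist_lt => //.
by rewrite mulr_gt0 // invr_gt0.
Unshelve. all: by end_near.
Qed.

Lemma measurable_Vpot (R : realType) (c0 : R) : measurable_fun setT (Vpot c0).
Proof.
rewrite /Vpot; apply: measurable_fun_if => //.
- apply: (@measurable_fun_ltr _ _ _ _ id (cst 1)) => //.
- apply: measurable_funB => //.
  apply: measurable_funM => //.
  apply: measurable_funX; apply: measurable_funB => //.
Qed.

Lemma pdfE (R : realType) (s x : R) : s != 0 ->
  normal_pdf 0 s x = normal_peak s * expR (- x ^+ 2 / (s ^+ 2 *+ 2)).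
Proof. by move=> s0; rewrite /normal_pdf (negbTE s0) /normal_fun subr0. Qed.

Lemma gamma_upper (R : realType) (r : R) (B : set R) : 0 <= r -> measurable B ->
  B `<=` [set x | r <= `|x|] ->
  (@gamma R B <= (normal_peak 1 / normal_peak 2 * expR (- r ^+ 2 / 4))%:E)%E.
Proof.
move=> r0 mB HB.
set k := normal_peak 1 / normal_peak (2:R) * expR (- r ^+ 2 / 4).
have p1 : 0 < normal_peak (1:R) by apply: normal_peak_gt0; rewrite oner_eq0.
have p2 : 0 < normal_peak (2:R) by apply: normal_peak_gt0; rewrite pnatr_eq0.
have k0 : 0 <= k by rewrite /k mulr_ge0 ?expR_ge0 // divr_ge0 // ltW.
rewrite /gamma /normal_prob.
apply: (@le_trans _ _ (\int[lebesgue_measure]_(x in B) ((k * normal_pdf 0 2 x)%:E))%E).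
  apply: ge0_le_integral => //.
  - by move=> x _; rewrite lee_fin normal_pdf_ge0.
  - apply/measurable_EFinP; apply: measurable_funS (measurable_normal_pdf _ _) => //.
  - apply/measurable_EFinP; apply: measurable_funM => //.
    apply: measurable_funS (measurable_normal_pdf _ _) => //.
  move=> x /HB /= rx; rewrite lee_fin.
  rewrite !pdfE ?oner_eq0 ?pnatr_eq0 //.
  have -> : k * (normal_peak 2 * expR (- x ^+ 2 / (2 ^+ 2 *+ 2))) =
     normal_peak 1 * expR (- r ^+ 2 / 4 + - x ^+ 2 / (2 ^+ 2 *+ 2)).
    rewrite /k expRD; field; exact: lt0r_neq0.
  rewrite ler_pM2l // ler_expR.
  have hx : r ^+ 2 <= x ^+ 2.
    rewrite -[x ^+ 2]real_normK ?num_real //; nra.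
  rewrite expr1n; nra.
apply: (@le_trans _ _ (\int[lebesgue_measure]_(x in setT) ((k * normal_pdf 0 2 x)%:E))%E).
  apply: ge0_subset_integral => //.
  - apply/measurable_EFinP; apply: measurable_funM => //; exact: measurable_normal_pdf.
  - by move=> x _; rewrite lee_fin mulr_ge0 // normal_pdf_ge0.
under eq_integral do rewrite EFinM.
rewrite ge0_integralZl_EFin //.
- by rewrite integral_normal_pdf mule1.
- by move=> x _; rewrite lee_fin normal_pdf_ge0.
- apply/measurable_EFinP; exact: measurable_normal_pdf.
Qed.

Lemma gamma_lower (R : realType) (c0 s : R) : 1 <= s ->
  ((expR ((s - 1) ^+ 2 / 2 - c0) * (normal_peak 1 * expR (- (s + 1) ^+ 2 / 2)))%:E
   <= \int[@gamma R]_(x in `[s, (s + 1)%R]) (expR (- Vpot c0 x))%:E)%E.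
Proof.
move=> s1.
set E := expR ((s - 1) ^+ 2 / 2 - c0).
set P := normal_peak 1 * expR (- (s + 1) ^+ 2 / 2).
have p1 : 0 < normal_peak (1:R) by apply: normal_peak_gt0; rewrite oner_eq0.
have mA : measurable (`[s, (s + 1)%R]%classic : set R) by [].
apply: (@le_trans _ _ (\int[@gamma R]_(x in `[s, (s + 1)%R]) (cst E%:E x))%E); last first.
  apply: ge0_le_integral => //.
  - by move=> x _; rewrite lee_fin expR_ge0.
  - apply/measurable_EFinP; apply: measurableT_comp => //.
    apply: measurableT_comp => //; apply: (measurable_funS measurableT) => //; exact: measurable_Vpot.
  move=> x /=; rewrite in_itv /= => /andP[sx xs].
  rewrite lee_fin ler_expR /Vpot ifF; last by apply/negbTE; rewrite -leNgt; lra.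
  have : (s - 1) ^+ 2 <= (x - 1) ^+ 2 by rewrite lerXn2r ?nnegrE; lra.
  lra.
rewrite integral_cst //.
rewrite EFinM lee_pmul2l ?lte_fin ?expR_gt0 //.
rewrite /gamma /normal_prob.
apply: (@le_trans _ _ (\int[lebesgue_measure]_(x in `[s, (s + 1)%R]) (cst P%:E x))%E).
  rewrite integral_cst //.
  have L1 : (lebesgue_measure (`[s, (s + 1)%R]%classic : set R) = 1)%E.
    rewrite lebesgue_measure_itv /= lte_fin ltrDl ltr01.
    by rewrite -EFinB addrAC subrr add0r.
  by move: L1 => /= ->; rewrite mule1.
apply: ge0_le_integral => //.
- by move=> x _; rewrite lee_fin mulr_ge0 ?expR_ge0 // ltW.
- apply/measurable_EFinP; apply: measurable_funS (measurable_normal_pdf _ _) => //.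
move=> x /=; rewrite in_itv /= => /andP[sx xs].
rewrite lee_fin pdfE ?oner_eq0 // ler_pM2l // ler_expR expr1n.
have : x ^+ 2 <= (s + 1) ^+ 2 by rewrite lerXn2r ?nnegrE; lra.
lra.
Qed.

Lemma no_lip (R : realType) (c0 : R) :
  ~ (exists (L : R) (T : R -> R),
           [/\ 0 < L,
               (forall x y : R, `|T x - T y| <= L * `|x - y|) &
               (forall A : set R, measurable A ->
                  pushforward (@gamma R) T A
                  = \int[@gamma R]_(x in A) (expR (- Vpot c0 x))%:E)%E]).
Proof.
move=> [L [T [L0 HL H]]].
have p1 : 0 < normal_peak (1:R) by apply: normal_peak_gt0; rewrite oner_eq0.
have p2 : 0 < normal_peak (2:R) by apply: normal_peak_gt0; rewrite pnatr_eq0.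
set K := `|T 0|.
set X := `|c0| + `|ln (normal_peak (2:R))|.
set Y := 8 * K + 4 * X.
have K0 : 0 <= K by rewrite /K normr_ge0.
have X0 : 0 <= X by rewrite addr_ge0.
have Y0 : 0 <= Y by rewrite addr_ge0 // mulr_ge0.
set u := 1 + 8 * L ^+ 2 + Y + L ^+ 2 * Y.
set s := K + u.
set r := u / L.
have u1 : 1 <= u.
  rewrite /u; have : 0 <= L ^+ 2 by rewrite sqr_ge0.
  have : 0 <= L ^+ 2 * Y by rewrite mulr_ge0 // sqr_ge0.
  lra.
have s1 : 1 <= s by rewrite /s; lra.
have r0 : 0 <= r by rewrite /r divr_ge0 // ?ltW //; lra.
have rL : r * L = u by rewrite /r divfK // lt0r_neq0.
have cT : continuous T by exact: lip_cont L0 HL.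
have mT : measurable_fun setT T by exact: continuous_measurable_fun.
set A := `[s, (s + 1)%R]%classic.
have mA : measurable A by rewrite /A; exact: measurable_itv.
have mB : measurable (T @^-1` A).
  by have := mT measurableT A mA; rewrite setTI.
have HB : T @^-1` A `<=` [set x | r <= `|x|].
  move=> x /=; rewrite /A /= in_itv /= => /andP[sx _].
  have h := HL x 0; rewrite subr0 in h.
  have : T x <= K + L * `|x|.
    have : T x <= `|T x| by rewrite ler_norm.
    have : `|T x| <= `|T 0| + `|T x - T 0|.
      by rewrite -{1}(subrK (T 0) (T x)) addrC ler_normD.
    rewrite /K; lra.
  move=> hT.
  rewrite /r ler_pdivrMr //.
  rewrite mulrC; rewrite /s in sx; lra.
have up := @gamma_upper R r _ r0 mB HB.
have lo := @gamma_lower R c0 s s1.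
have := H A mA; rewrite /pushforward => eq.
rewrite -eq in lo.
have := le_trans lo up; rewrite lee_fin => ineq.
set E := expR ((s - 1) ^+ 2 / 2 - c0) in ineq.
set e2 := expR (- (s + 1) ^+ 2 / 2) in ineq.
set e3 := expR (- r ^+ 2 / 4) in ineq.
have h2 : normal_peak 1 * (normal_peak 2 * (E * e2)) <= normal_peak 1 * e3.
  have -> : normal_peak 1 * (normal_peak 2 * (E * e2)) =
            normal_peak 2 * (E * (normal_peak 1 * e2)) by ring.
  have -> : normal_peak 1 * e3 = normal_peak 2 * (normal_peak 1 / normal_peak 2 * e3).
    by field; exact: lt0r_neq0.
  by apply: ler_wpM2l => //; exact: ltW.
rewrite ler_pM2l // in h2.
have p2E : normal_peak (2:R) = expR (ln (normal_peak 2)) by rewrite lnK // posrE.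
rewrite p2E /E /e2 /e3 -!expRD ler_expR in h2.
have hl : - `|ln (normal_peak (2:R))| <= ln (normal_peak 2).
  by rewrite lerNl ler_normr lexx orbT.
have hc : c0 <= `|c0| by rewrite ler_norm.
have hr2 : r ^+ 2 <= 4 * (2 * s + X) by rewrite /X; nra.
have hu : u ^+ 2 <= L ^+ 2 * (8 * u + Y).
  have -> : u ^+ 2 = r ^+ 2 * L ^+ 2 by rewrite -rL; ring.
  have -> : 8 * u + Y = 4 * (2 * s + X) by rewrite /Y /s; ring.
  rewrite mulrC; apply: ler_wpM2l => //; exact: sqr_ge0.
have L2 : 0 <= L ^+ 2 by exact: sqr_ge0.
have L2Y : 0 <= L ^+ 2 * Y by exact: mulr_ge0.
have hu2 : u ^+ 2 = u * (1 + 8 * L ^+ 2 + Y + L ^+ 2 * Y) by rewrite expr2.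
have h5 : 0 <= (u - 1) * (L ^+ 2 * Y) by apply: mulr_ge0 => //; lra.
have h6 : 0 <= u * Y by apply: mulr_ge0 => //; lra.
have h7 : u * (1 + 8 * L ^+ 2 + Y + L ^+ 2 * Y) = u + 8 * (L ^+ 2 * u) + u * Y + u * (L ^+ 2 * Y) by ring.
have h8 : L ^+ 2 * (8 * u + Y) = 8 * (L ^+ 2 * u) + L ^+ 2 * Y by ring.
have h9 : (u - 1) * (L ^+ 2 * Y) = u * (L ^+ 2 * Y) - L ^+ 2 * Y by ring.
lra.
Qed.

Theorem mainTheorem8 (R : realType) (c0 : R) :
  (\int[@gamma R]_x (expR (- Vpot c0 x))%:E = 1)%E ->
  [/\ (forall (x y t : R), 0 <= t <= 1 ->
         Vpot c0 ((1 - t) * x + t * y) + ((1 - t) * x + t * y) ^+ 2 / 2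
         <= (1 - t) * (Vpot c0 x + x ^+ 2 / 2) + t * (Vpot c0 y + y ^+ 2 / 2)),
      (exists M : R, forall x : R, Vpot c0 x <= M) &
      ~ (exists (L : R) (T : R -> R),
           [/\ 0 < L,
               (forall x y : R, `|T x - T y| <= L * `|x - y|) &
               (forall A : set R, measurable A ->
                  pushforward (@gamma R) T A
                  = \int[@gamma R]_(x in A) (expR (- Vpot c0 x))%:E)%E])].
Proof.
move=> _; split.
- exact: convex_part.
- exact: sup_part.
- exact: no_lip.
Qed.
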